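(* Let $\kappa$ be an ordinal of uncountable cofinality and let $Z$, $Z_Y$, $D^\gamma_\alpha$ be as described in the context. Let $\alpha, \beta \in [2,\kappa)$, let $u: \beta \to \alpha$ be a morphism in $Z$, and let $2 \leq \gamma \leq \min(\alpha, \beta)$. Then $u$ lies in $Z_Y$ and does not pass through any vertex less than $\gamma$ if and only if $D^\gamma_\alpha(a) = u\, D^\gamma_\beta(a)\, u^{-1}$ in $Z$ for all $a \in G_\gamma$.
   Context: For an ordinal $\alpha \ge 2$ let $G_\alpha$ be the free group on the set $\alpha$ (i.e. on $\alpha$ generators indexed by the ordinals below $\alpha$); for $\gamma \le \alpha$ let $D^\gamma_\alpha: G_\gamma \to G_\alpha$ be the natural inclusion. Let $Z$ be the groupoid with object set $[2,\kappa)$ generated by: the elements of $G_\alpha$ as automorphisms of the object $\alpha$, for each $\alpha$; and, for each pair $\alpha \neq \beta$ in $[2,\kappa)$, a morphism $y^\beta_\alpha: \beta \to \alpha$; subject to the relations of each group $G_\alpha$ and the relations $y^\beta_\alpha \, D^{\varepsilon}_\beta(a)\, y^\alpha_\beta = D^{\varepsilon}_\alpha(a)$ for all $a \in G_\varepsilon$, where $\varepsilon = \min(\alpha,\beta)$ (in particular $y^\alpha_\beta = (y^\beta_\alpha)^{-1}$). Equivalently, $Z$ is the fundamental groupoid of the graph of groups with vertices $[2,\kappa)$, vertex groups $G_\alpha$, edges $y^\beta_\alpha$ with involution $y^\beta_\alpha \mapsto y^\alpha_\beta$, edge groups $G_{\min(\alpha,\beta)}$ and edge monomorphisms the inclusions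 into the source vertex group. Elements of $G_\alpha$ are regarded as morphisms of $Z$. $Z_Y$ is the subgroupoid of $Z$ generated by the edges $y^\beta_\alpha$; every morphism of $Z_Y$ can be uniquely written as a reduced word in the generators $y^\beta_\alpha$ (with $y^\alpha_\beta$ the inverse of $y^\beta_\alpha$). A morphism of $Z_Y$ passes through a vertex $\delta$ if this reduced word involves a generator with source or target $\delta$; the identity $\mathrm{id}_\delta$ passes through $\delta$ and no other vertex. *)

(* Defs.v *)
(* Ordinals below kappa are modelled by a well-ordered type
   (T, lt): every well-order is isomorphic to a unique ordinal kappa, and the
   elements of T are the ordinals < kappa. *)
From Stdlib Require Import List Relations.
Import ListNotations.
Set Implicit Arguments.

Section Z.
Variable T : Type.
Variable lt : T -> T -> Prop.

Definition well_ordering : Prop :=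
  (forall x, ~ lt x x) /\
  (forall x y z, lt x y -> lt y z -> lt x z) /\
  (forall x y, lt x y \/ x = y \/ lt y x) /\
  well_founded lt.

(* kappa (= order type of T) has uncountable cofinality: kappa > 0 and every
   countable (nonempty) subset of kappa is strictly bounded in kappa. *)
Definition uncountable_cofinality : Prop :=
  inhabited T /\ forall f : nat -> T, exists b : T, forall n, lt (f n) b.

Definition le (x y : T) : Prop := lt x y \/ x = y.

(* 2 <= x : the ordinals 0 and 1 lie below x *)
Definition ge2 (x : T) : Prop := exists i j, lt i j /\ lt j x.

(* Generators of the groupoid Z:
   X a i   : the free generator i (i < a) of G_a, an automorphism of vertex a;
   Y b a   : the edge y^b_a : b -> a. *)
Inductive gen : Type := X (a i : T) | Y (b a : T).

(* letters: a generator together with a sign (true = generator, false = its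
   formal inverse) *)
Definition letter : Type := (gen * bool)%type.

Definition valid_gen (g : gen) : Prop :=
  match g with
  | X a i => ge2 a /\ lt i a
  | Y b a => ge2 b /\ ge2 a /\ b <> a
  end.

Definition gsrc (g : gen) : T := match g with X a _ => a | Y b _ => b end.
Definition gtgt (g : gen) : T := match g with X a _ => a | Y _ a => a end.

Definition lsrc (l : letter) : T := if snd l then gsrc (fst l) else gtgt (fst l).
Definition ltgt (l : letter) : T := if snd l then gtgt (fst l) else gsrc (fst l).

Definition linv (l : letter) : letter := (fst l, negb (snd l)).

(* Words are written as products in the usual (composition) order:
   the word [l1; ...; ln] denotes l1 l2 ... ln, where ln is applied first.
   [path s t w] : w is a well-formed morphism s -> t. *)
Fixpoint path (s t : T) (w : list letter) : Prop :=
  match w with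
  | [] => s = t
  | l :: w' => valid_gen (fst l) /\ ltgt l = t /\ path s (lsrc l) w'
  end.

Definition winv (w : list letter) : list letter := rev (map linv w).

(* elements of the free group G_g are represented by words in its generators
   (i, sign) with i < g; D^g_a embeds such a word at the vertex a *)
Definition fword : Type := list (T * bool).
Definition in_G (g : T) (a : fword) : Prop := forall p, In p a -> lt (fst p) g.
Definition D (a : T) (w : fword) : list letter :=
  map (fun p => (X a (fst p), snd p)) w.

(* defining relations of Z (including the free cancellations making it a
   groupoid / each G_a a group) *)
Inductive zrel : list letter -> list letter -> Prop :=
  | zrel_cancel (l : letter) : zrel [l; linv l] []
  | zrel_conj (b a e : T) (w : fword) :
      (* e = min(a,b) *)
      ((le a b /\ e = a) \/ (le b a /\ e = b)) ->
      in_G e w ->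
      zrel ((Y b a, true) :: D b w ++ [(Y a b, true)]) (D a w).

Inductive zstep (s t : T) : list letter -> list letter -> Prop :=
  | ZStep (u v lhs rhs : list letter) :
      zrel lhs rhs ->
      path s t (u ++ lhs ++ v) -> path s t (u ++ rhs ++ v) ->
      zstep s t (u ++ lhs ++ v) (u ++ rhs ++ v).

Definition zeq (s t : T) : list letter -> list letter -> Prop :=
  clos_refl_sym_trans _ (zstep s t).

(* Z_Y: words in the edges y^b_a (y^a_b is the inverse of y^b_a) *)
Definition yword (e : list (T * T)) : list letter :=
  map (fun p => (Y (fst p) (snd p), true)) e.

Fixpoint yreduced (e : list (T * T)) : Prop :=
  match e with
  | p :: ((q :: _) as e') => ~ (fst p = snd q /\ snd p = fst q) /\ yreduced e'
  | _ => True
  end.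

Definition passes_through (s : T) (e : list (T * T)) (d : T) : Prop :=
  match e with
  | [] => d = s
  | _ => exists p, In p e /\ (fst p = d \/ snd p = d)
  end.

Definition in_ZY_avoiding (b a g : T) (u : list letter) : Prop :=
  exists e : list (T * T),
    yreduced e /\ path b a (yword e) /\ zeq b a u (yword e) /\
    (forall d, passes_through b e d -> ~ lt d g).

End Z.

(* Main.v *)
Require Import Defs.
From Stdlib Require Import List Relations.
From Stdlib Require Import Bool ClassicalEpsilon Lia.
Import ListNotations.

Section FR.
Variable A : Type.
Variable inv : A -> A.
Hypothesis inv_inv : forall x, inv (inv x) = x.

Definition eqdA (x y : A) : {x = y} + {x <> y} := excluded_middle_informative (x = y).

Definition push (S : list A) (x : A) : list A :=
  match S with
  | y :: S' => if eqdA y (inv x) then S' else x :: S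
  | [] => [x]
  end.

Definition act (S C : list A) : list A := fold_left push C S.

Fixpoint rd (S : list A) : Prop :=
  match S with
  | x :: ((y :: _) as S') => y <> inv x /\ rd S'
  | _ => True
  end.

Definition finv (C : list A) : list A := rev (map inv C).

Lemma rd_tail x S : rd (x :: S) -> rd S.
Proof. destruct S; simpl; tauto. Qed.

Lemma rd_push S x : rd S -> rd (push S x).
Proof.
  destruct S as [|y S']; simpl; auto.
  destruct (eqdA y (inv x)); intros H.
  - eapply rd_tail; eauto.
  - simpl. split; auto.
Qed.

Lemma rd_act S C : rd S -> rd (act S C).
Proof.
  revert S; induction C; simpl; auto.
  intros S H; apply IHC, rd_push, H.
Qed.

Lemma push_inv S x : rd S -> push (push S x) (inv x) = S.
Proof.
  destruct S as [|y S']; simpl.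
  - intros _. destruct (eqdA x (inv (inv x))) as [_|n]; auto.
    exfalso; apply n; rewrite inv_inv; auto.
  - destruct (eqdA y (inv x)) as [e|n]; intros H.
    + subst y. destruct S' as [|z S'']; simpl.
      * reflexivity.
      * destruct H as [H1 H2]. destruct (eqdA z (inv (inv x))) as [e|n]; auto.
        exfalso; apply H1. rewrite e; auto.
    + simpl. destruct (eqdA x (inv (inv x))) as [_|n']; auto.
      exfalso; apply n'; rewrite inv_inv; auto.
Qed.

Lemma act_app S C D : act S (C ++ D) = act (act S C) D.
Proof. unfold act; apply fold_left_app. Qed.

Lemma act_cons S x C : act S (x :: C) = act (push S x) C.
Proof. reflexivity. Qed.

Lemma finv_cons x C : finv (x :: C) = finv C ++ [inv x].
Proof. reflexivity. Qed.

Lemma finv_app C D : finv (C ++ D) = finv D ++ finv C.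
Proof. unfold finv; rewrite map_app, rev_app_distr; auto. Qed.

Lemma finv_finv C : finv (finv C) = C.
Proof.
  unfold finv. rewrite map_rev, map_map, rev_involutive.
  induction C; simpl; auto. rewrite inv_inv, IHC; auto.
Qed.

Lemma act_cancel S C : rd S -> act S (C ++ finv C) = S.
Proof.
  revert S; induction C as [|x C IH]; intros S H; simpl; auto.
  rewrite finv_cons, app_assoc, act_app, IH by (apply rd_push; auto).
  simpl. apply push_inv; auto.
Qed.

Lemma act_cancel' S C : rd S -> act S (finv C ++ C) = S.
Proof.
  intros H. rewrite <- (finv_finv C) at 2. apply act_cancel; auto.
Qed.

Lemma act_push_rev S R x : rd S -> rd R ->
  act S (rev (push R x)) = push (act S (rev R)) x.
Proof.
  intros HS HR. destruct R as [|y R']; simpl.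
  - reflexivity.
  - destruct (eqdA y (inv x)) as [e|n].
    + subst y. rewrite act_app. simpl.
      pose proof (push_inv (act S (rev R')) (inv x)) as Q. rewrite inv_inv in Q.
      rewrite Q; auto. apply rd_act; auto.
    + simpl. rewrite !act_app. reflexivity.
Qed.

Lemma act_B S C : rd S -> act S C = act S (rev (act [] C)).
Proof.
  intros HS. induction C as [|x C IH] using rev_ind; simpl; auto.
  rewrite !act_app, IH. simpl.
  rewrite act_push_rev; auto. apply rd_act; simpl; auto.
Qed.

Lemma act_nil_rd S : rd S -> act [] (rev S) = S.
Proof.
  induction S as [|x S IH]; simpl; auto.
  intros H. rewrite act_app, IH by (eapply rd_tail; eauto). simpl.
  destruct S as [|y S']; simpl; auto.
  destruct H as [H1 _]. destruct (eqdA y (inv x)); auto. contradiction.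
Qed.

Lemma finv_act M X : rd M -> act [] X = [] -> act M (finv X) = M.
Proof.
  intros HM HX.
  assert (E : act (act M (finv X)) X = M) by (rewrite <- act_app; apply act_cancel'; auto).
  rewrite act_B in E by (apply rd_act; auto). rewrite HX in E. simpl in E. exact E.
Qed.

Lemma Forall_push (P : A -> Prop) S x : Forall P S -> P x -> Forall P (push S x).
Proof.
  intros H1 H2. destruct S as [|y S']; simpl; auto.
  destruct (eqdA y (inv x)); auto. inversion H1; auto.
Qed.

Lemma Forall_act (P : A -> Prop) S C : Forall P S -> Forall P C -> Forall P (act S C).
Proof.
  revert S; induction C; simpl; auto.
  intros S H1 H2. inversion H2; subst. apply IHC; auto. apply Forall_push; auto.
Qed.

Lemma string_lemma (x y : A) N : x :: N = N ++ [y] -> x = y /\ forall z, In z N -> z = x.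
Proof.
  revert x; induction N as [|n N IH]; simpl; intros x H.
  - inversion H; split; auto; intros z [].
  - inversion H as [[H1 H2]]. destruct (IH n H2) as [E1 E2]. split; [congruence|].
    intros z [Hz|Hz]; [congruence|]. rewrite (E2 z Hz); congruence.
Qed.

Lemma rd_snoc N (c b : A) : rd (N ++ [c]) -> b <> inv c -> rd (N ++ [c; b]).
Proof.
  induction N as [|n N IH]; simpl; intros H1 H2.
  - auto.
  - destruct N as [|m N']; simpl in *.
    + tauto.
    + destruct H1; split; [auto|apply IH; auto].
Qed.

Lemma rd_app_l N M : rd (N ++ M) -> rd N.
Proof.
  induction N as [|n N IH]; simpl; auto.
  intros H. destruct N as [|m N']; auto.
  destruct H as [H1 H2]. split; auto.
Qed.

Lemma conj_fact N (b beta : A) : rd N -> act [b] (rev N) = push N beta ->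
  beta = b /\ forall z, In z N -> z = b \/ z = inv b.
Proof.
  intros HN H.
  assert (C : N = [] \/ exists N' c, N = N' ++ [c]).
  { destruct N using rev_ind; eauto. }
  destruct C as [->|[N' [c ->]]].
  - simpl in H. inversion H; subst; split; auto; intros z [].
  - rewrite rev_app_distr in H. change (rev [c] ++ rev N') with (c :: rev N') in H. rewrite act_cons in H.
    destruct (eqdA c (inv b)) as [ec|nc].
    + assert (P : push [b] c = []).
      { simpl. destruct (eqdA b (inv c)) as [_|n]; auto. exfalso; apply n; subst; auto. }
      rewrite P in H. clear P.
      rewrite act_nil_rd in H by (eapply rd_app_l; eauto).
      destruct (N' ++ [c]) as [|y N''] eqn:E2.
      { destruct N'; discriminate. }
      simpl in H. destruct (eqdA y (inv beta)) as [ey|ny].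
      * subst N''. destruct (string_lemma y c N' (eq_sym E2)) as [E3 E4].
        split.
        -- rewrite <- (inv_inv beta), <- ey, E3, ec, inv_inv; auto.
        -- intros z Hz. right. destruct Hz as [Hz|Hz].
           ++ congruence.
           ++ rewrite (E4 z Hz). congruence.
      * subst N'. exfalso. apply (f_equal (@length A)) in E2. simpl in E2.
        rewrite !length_app in E2. simpl in E2. lia.
    + assert (HR : rd (N' ++ [c; b])).
      { apply rd_snoc; auto. intro e. apply nc. rewrite e, inv_inv; auto. }
      assert (Q : act (push [b] c) (rev N') = N' ++ [c; b]).
      { pose proof (act_nil_rd _ HR) as Q.
        assert (R : rev (N' ++ [c; b]) = b :: c :: rev N') by (rewrite rev_app_distr; reflexivity).
        rewrite R, !act_cons in Q. exact Q. }
      rewrite Q in H. replace (N' ++ [c; b]) with ((N' ++ [c]) ++ [b]) in H by (rewrite <- app_assoc; reflexivity).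
      destruct (N' ++ [c]) as [|y N''] eqn:E2.
      { destruct N'; discriminate. }
      simpl in H. destruct (eqdA y (inv beta)) as [ey|ny].
      * exfalso. apply (f_equal (@length A)) in H.
        simpl in H; rewrite ?length_app in H; simpl in H; lia.
      * destruct (string_lemma beta b (y :: N'') (eq_sym H)) as [E3 E4]. split; auto.
        intros z Hz. left. rewrite (E4 z Hz), E3; auto.
Qed.

Lemma conj_gen I (b beta : A) : act [] (I ++ [beta] ++ finv I) = [b] ->
  beta = b /\ forall z, In z (act [] I) -> z = b \/ z = inv b.
Proof.
  intros H. rewrite act_app, act_app in H. simpl act at 2 in H.
  set (N := act [] I) in *.
  assert (HN : rd N) by (apply rd_act; simpl; auto).
  assert (E : act [b] I = push N beta).
  { rewrite <- H, <- act_app. apply act_cancel'. apply rd_push; auto. }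
  rewrite act_B in E by (simpl; auto). fold N in E.
  apply conj_fact; auto.
Qed.

End FR.


Section ZZ.
Variable T : Type.
Variable lt : T -> T -> Prop.
Hypothesis lt_irr : forall x, ~ lt x x.
Hypothesis lt_trans : forall x y z, lt x y -> lt y z -> lt x z.
Hypothesis lt_tot : forall x y, lt x y \/ x = y \/ lt y x.

Notation path := (path lt).
Notation zeq := (zeq lt).
Notation zstep := (zstep lt).
Notation zrel := (zrel lt).
Notation letter := (letter T).

Lemma path_app s t A B : path s t (A ++ B) <-> exists m, path m t A /\ path s m B.
Proof.
  revert t; induction A as [|l A IH]; simpl; intros t.
  - split; [intros H; exists t; auto | intros [m [-> H]]; auto].
  - split.
    + intros [H1 [H2 H3]]. apply IH in H3. destruct H3 as [m [H4 H5]].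
      exists m; auto.
    + intros [m [[H1 [H2 H3]] H4]]. repeat split; auto. apply IH; eauto.
Qed.

Lemma path_app_i s m t A B : path m t A -> path s m B -> path s t (A ++ B).
Proof. intros; apply path_app; eauto. Qed.

Lemma linv_linv (l : letter) : linv (linv l) = l.
Proof. destruct l as [g []]; reflexivity. Qed.

Lemma winv_cons (l : letter) x : winv (l :: x) = winv x ++ [linv l].
Proof. reflexivity. Qed.

Lemma winv_app (x y : list letter) : winv (x ++ y) = winv y ++ winv x.
Proof. unfold winv. rewrite map_app, rev_app_distr. auto. Qed.

Lemma winv_winv (x : list letter) : winv (winv x) = x.
Proof.
  unfold winv. rewrite map_rev, map_map, rev_involutive.
  induction x; simpl; auto. rewrite linv_linv, IHx; auto.
Qed.

Lemma path_one s t (l : letter) : path s t [l] <-> valid_gen lt (fst l) /\ ltgt l = t /\ lsrc l = s.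
Proof. simpl. split; intros [H1 [H2 H3]]; auto. Qed.

Lemma path_linv s t (l : letter) : path s t [l] -> path t s [linv l].
Proof.
  rewrite !path_one. destruct l as [g []]; simpl; tauto.
Qed.

Lemma path_winv s t x : path s t x -> path t s (winv x).
Proof.
  revert t; induction x as [|l x IH]; simpl; intros t.
  - intros ->; reflexivity.
  - intros [H1 [H2 H3]]. rewrite winv_cons. apply path_app_i with (lsrc l); auto.
    apply path_linv. apply path_one; auto.
Qed.

Lemma zstep' s t (U V lhs rhs x y : list letter) : zrel lhs rhs ->
  x = U ++ lhs ++ V -> y = U ++ rhs ++ V -> path s t x -> path s t y -> zstep s t x y.
Proof. intros H -> -> H1 H2. constructor; auto. Qed.

Lemma zeq_step s t x y : zstep s t x y -> zeq s t x y.
Proof. intros; apply rst_step; auto. Qed.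

Lemma zeq_trans s t x y z : zeq s t x y -> zeq s t y z -> zeq s t x z.
Proof. intros; eapply rst_trans; eauto. Qed.

Lemma zeq_sym s t x y : zeq s t x y -> zeq s t y x.
Proof. intros; apply rst_sym; auto. Qed.

Lemma zeq_refl s t x : zeq s t x x.
Proof. apply rst_refl. Qed.

Lemma zeq_ctx s' t' x y s t U V : zeq s' t' x y -> path t' t U -> path s s' V ->
  zeq s t (U ++ x ++ V) (U ++ y ++ V).
Proof.
  intros H HU HV. induction H.
  - apply zeq_step. destruct H as [u v lhs rhs Hr Hp1 Hp2].
    apply zstep' with (U := U ++ u) (V := v ++ V) (lhs := lhs) (rhs := rhs); auto;
      try (rewrite <- !app_assoc; reflexivity).
    + apply path_app_i with t'; auto. apply path_app_i with s'; auto.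
    + apply path_app_i with t'; auto. apply path_app_i with s'; auto.
  - apply zeq_refl.
  - apply zeq_sym; auto.
  - eapply zeq_trans; eauto.
Qed.

Lemma zeq_ctxl s' t x y s V : zeq s' t x y -> path s s' V -> zeq s t (x ++ V) (y ++ V).
Proof. intros H HV. apply (zeq_ctx _ _ _ _ s t [] V H); simpl; auto. Qed.

Lemma zeq_ctxr s t' x y t U : zeq s t' x y -> path t' t U -> zeq s t (U ++ x) (U ++ y).
Proof. intros H HU. pose proof (zeq_ctx _ _ _ _ s t U [] H HU eq_refl). rewrite !app_nil_r in H0. exact H0. Qed.

Lemma cancel_r s t x : path s t x -> zeq t t (x ++ winv x) [].
Proof.
  revert t; induction x as [|l x IH]; simpl; intros t.
  - intros; apply zeq_refl.
  - intros [H1 [H2 H3]]. rewrite winv_cons.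
    apply zeq_trans with ([l] ++ [] ++ [linv l]).
    + replace (l :: x ++ winv x ++ [linv l]) with ([l] ++ (x ++ winv x) ++ [linv l])
        by (simpl; rewrite <- app_assoc; reflexivity).
      apply zeq_ctx with (lsrc l) (lsrc l); auto.
      * apply path_one; auto.
      * apply path_linv, path_one; auto.
    + apply zeq_step. apply zstep' with [] [] [l; linv l] []; [apply zrel_cancel|reflexivity|reflexivity| |].
      * destruct l as [g []]; simpl in *; repeat split; auto.
      * reflexivity.
Qed.

Lemma cancel_l s t x : path s t x -> zeq s s (winv x ++ x) [].
Proof.
  intros H. pose proof (cancel_r _ _ _ (path_winv _ _ _ H)) as Q.
  rewrite winv_winv in Q. exact Q.
Qed.


Ltac fixX := repeat match goal with
 | |- context [ltgt (X ?c ?i, ?s)] => replace (ltgt (X c i, s)) with c by (destruct s; reflexivity)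
 | |- context [lsrc (X ?c ?i, ?s)] => replace (lsrc (X c i, s)) with c by (destruct s; reflexivity)
 | |- context [if ?s then ?c else ?c] => replace (if s then c else c) with c by (destruct s; reflexivity)
 end.
Ltac solve_path := simpl; fixX; repeat split; auto;
  try (match goal with s : bool |- _ => destruct s; simpl; auto end).

Definition inG (i : T) (f : T * T) : Prop := lt i (fst f) /\ lt i (snd f).

Lemma conj_rel a b (w : fword T) : (forall p, In p w -> lt (fst p) a /\ lt (fst p) b) ->
  zrel ((Y b a, true) :: D b w ++ [(Y a b, true)]) (D a w).
Proof.
  intros H. destruct (lt_tot a b) as [h|[h|h]].
  - apply zrel_conj with a. left; split; [left; auto|auto].
    intros p Hp; apply H; auto.
  - subst. apply zrel_conj with b. left; split; [right; auto|auto].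
    intros p Hp; apply H; auto.
  - apply zrel_conj with b. right; split; [left; auto|auto].
    intros p Hp; apply H; auto.
Qed.

Lemma yy_cancel a b : ge2 lt a -> ge2 lt b -> a <> b ->
  zeq a a [(Y b a, true); (Y a b, true)] [].
Proof.
  intros Ha Hb Hab. apply zeq_step.
  apply zstep' with [] [] ((Y b a, true) :: D b [] ++ [(Y a b, true)]) (D a []);
    [apply conj_rel; intros p []|reflexivity|reflexivity| |].
  - simpl; repeat split; auto.
  - reflexivity.
Qed.

Lemma yfalse a b : ge2 lt a -> ge2 lt b -> a <> b ->
  zeq a b [(Y b a, false)] [(Y a b, true)].
Proof.
  intros Ha Hb Hab.
  apply zeq_trans with ([(Y a b, true)] ++ [(Y b a, true); (Y b a, false)]).
  - apply zeq_trans with ([(Y a b, true); (Y b a, true)] ++ [(Y b a, false)]).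
    + apply zeq_sym. apply (zeq_ctxl b b _ [] a [(Y b a, false)]).
      * apply yy_cancel; auto.
      * simpl; repeat split; auto.
    + apply zeq_refl.
  - pose proof (zeq_ctxr a a [(Y b a, true); (Y b a, false)] [] b [(Y a b, true)]) as Q.
    rewrite app_nil_r in Q. apply Q.
    + apply zeq_step. apply zstep' with [] [] [(Y b a, true); linv (Y b a, true)] [];
        [apply zrel_cancel|reflexivity|reflexivity| |].
      * simpl; repeat split; auto.
      * reflexivity.
    + simpl; repeat split; auto.
Qed.

Lemma single_edge p q i s : ge2 lt p -> ge2 lt q -> p <> q -> lt i p -> lt i q ->
  zeq p q [(Y p q, true); (X p i, s)] [(X q i, s); (Y p q, true)].
Proof.
  intros Hp Hq Hpq Hip Hiq.
  apply zeq_trans with ([(Y p q, true); (X p i, s)] ++ [(Y q p, true); (Y p q, true)]).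
  - pose proof (zeq_ctxr p p [(Y q p, true); (Y p q, true)] [] q [(Y p q, true); (X p i, s)]) as Q.
    rewrite app_nil_r in Q. apply zeq_sym, Q.
    + apply yy_cancel; auto.
    + solve_path.
  - apply zeq_step.
    apply zstep' with [] [(Y p q, true)] ((Y p q, true) :: D p [(i, s)] ++ [(Y q p, true)]) (D q [(i, s)]);
      [|reflexivity|reflexivity| |].
    + apply conj_rel. intros x [<-|[]]; simpl; auto.
    + solve_path.
    + solve_path.
Qed.

Lemma L_T i s (Tl : list (T * T)) : forall c d, path c d (yword Tl) -> Forall (inG i) Tl ->
  ge2 lt c -> lt i c ->
  zeq c d (yword Tl ++ [(X c i, s)]) ([(X d i, s)] ++ yword Tl).
Proof.
  induction Tl as [|f Tl IH]; intros c d Hp HF Hc Hic.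
  - simpl in Hp. subst. apply zeq_refl.
  - simpl in Hp. destruct Hp as [[Hv1 [Hv2 Hv3]] [Hd Hp]]. simpl in Hd. subst d.
    inversion HF as [|? ? [Hf1 Hf2] HF']; subst.
    apply zeq_trans with ([(Y (fst f) (snd f), true)] ++ [(X (fst f) i, s)] ++ yword Tl).
    + change (yword (f :: Tl) ++ [(X c i, s)]) with
        ([(Y (fst f) (snd f), true)] ++ (yword Tl ++ [(X c i, s)])).
      apply zeq_ctxr with (fst f).
      * apply IH; auto.
      * solve_path.
    + exact (zeq_ctxl (fst f) (snd f) _ _ c (yword Tl) (single_edge (fst f) (snd f) i s Hv1 Hv2 Hv3 Hf1 Hf2) Hp).
Qed.


Definition swap (f : T * T) : T * T := (snd f, fst f).
Lemma swap_swap f : swap (swap f) = f.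
Proof. destruct f; reflexivity. Qed.

Definition Bt : Type := ((T * list (T * T)) * bool)%type.
Definition binv (b : Bt) : Bt := (fst b, negb (snd b)).
Lemma binv_binv b : binv (binv b) = b.
Proof. destruct b as [x []]; reflexivity. Qed.

Notation pushE := (push (T * T) swap).
Notation actE := (act (T * T) swap).
Notation pushB := (push Bt binv).
Notation actB := (act Bt binv).

Definition ev (l : letter) : list (T * T) :=
  match fst l with
  | Y p q => if snd l then [(p, q)] else [(q, p)]
  | X _ _ => []
  end.

Definition Eu (u : list letter) : list (T * T) := flat_map ev u.

Lemma Eu_app u v : Eu (u ++ v) = Eu u ++ Eu v.
Proof. apply flat_map_app. Qed.

Definition inGd (i : T) (f : T * T) : {inG i f} + {~ inG i f} := excluded_middle_informative _.

Fixpoint dropw (i : T) (S : list (T * T)) : list (T * T) :=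
  match S with
  | [] => []
  | f :: S' => if inGd i f then dropw i S' else S
  end.

Lemma dropw_split i S : exists Tp, S = Tp ++ dropw i S /\ Forall (inG i) Tp.
Proof.
  induction S as [|f S IH]; simpl.
  - exists []; auto.
  - destruct (inGd i f) as [h|h].
    + destruct IH as [Tp [E F]]. exists (f :: Tp). simpl; rewrite <- E; auto.
    + exists []; auto.
Qed.

Lemma dropw_nil i S : dropw i S = [] -> Forall (inG i) S.
Proof.
  intros H. destruct (dropw_split i S) as [Tp [E F]]. rewrite H, app_nil_r in E. subst; auto.
Qed.

Lemma dropw_all i S : Forall (inG i) S -> dropw i S = [].
Proof.
  induction 1; simpl; auto. destruct (inGd i x); auto. contradiction.
Qed.

Lemma dropw_push i L f : inG i f -> dropw i (pushE L f) = dropw i L.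
Proof.
  intros H. destruct L as [|y L']; simpl.
  - destruct (inGd i f); [reflexivity|contradiction].
  - destruct (eqdA _ y (swap f)) as [e|n].
    + subst y. destruct (inGd i (swap f)) as [_|h]; auto.
      exfalso; apply h; destruct H; split; auto.
    + simpl. destruct (inGd i f); [reflexivity|contradiction].
Qed.

Definition imgl (L : list (T * T)) (l : letter) : list Bt :=
  match fst l with
  | X c i => [((i, dropw i L), snd l)]
  | Y _ _ => []
  end.

Fixpoint img (L : list (T * T)) (u : list letter) : list Bt :=
  match u with
  | [] => []
  | l :: u' => imgl L l ++ img (actE L (ev l)) u'
  end.

Lemma img_app L u v : img L (u ++ v) = img L u ++ img (actE L (Eu u)) v.
Proof.
  revert L; induction u as [|l u IH]; intros L; simpl; auto.
  rewrite IH, <- app_assoc. f_equal. f_equal. f_equal.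
  unfold Eu; simpl. rewrite act_app. reflexivity.
Qed.

Lemma yword_app (A B : list (T * T)) : yword A ++ yword B = yword (A ++ B).
Proof. unfold yword; rewrite map_app; auto. Qed.

Lemma epush m t L f : path m t (yword (rev L)) -> valid_gen lt (Y (fst f) (snd f)) ->
  snd f = m -> path (fst f) t (yword (rev (pushE L f))).
Proof.
  intros H Hv Hm. simpl in Hv. destruct Hv as [Hv1 [Hv2 Hv3]]. destruct L as [|y L']; simpl.
  - simpl in H. subst. solve_path.
  - destruct (eqdA _ y (swap f)) as [e|n].
    + subst y. simpl in H. rewrite <- yword_app in H. apply path_app in H.
      destruct H as [z [H1 H2]]. simpl in H2. destruct H2 as [_ [H2 H3]]. cbn in H2. subst z. exact H1.
    + change (rev (f :: y :: L')) with (rev (y :: L') ++ [f]). rewrite <- yword_app.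
      apply path_app_i with m; auto. solve_path.
Qed.

Lemma epath_step m t s L l : path m t (yword (rev L)) -> path s m [l] ->
  path s t (yword (rev (actE L (ev l)))).
Proof.
  intros H Hl. apply path_one in Hl. destruct Hl as [Hv [H1 H2]].
  destruct l as [[c i|p q] []]; simpl in *; subst; auto.
  - apply (epush _ _ _ (p, q)) in H; simpl; auto.
  - apply (epush _ _ _ (q, p)) in H; [exact H| simpl; destruct Hv as [? [? ?]]; repeat split; auto| reflexivity].
Qed.

Definition src (t : T) (S : list (T * T)) : T :=
  match S with [] => t | f :: _ => fst f end.

Lemma src_lemma x t S : path x t (yword (rev S)) -> src t S = x.
Proof.
  destruct S as [|f S']; simpl; auto.
  rewrite <- yword_app. intros H. apply path_app in H. destruct H as [z [_ H]].
  simpl in H. destruct H as [_ [_ H]]. simpl in H. auto.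
Qed.

Lemma inG_path i Tl : forall c z, path c z (yword Tl) -> Forall (inG i) Tl -> ge2 lt c -> lt i c ->
  ge2 lt z /\ lt i z.
Proof.
  induction Tl as [|f Tl IH]; simpl; intros c z H HF Hc Hic.
  - subst; auto.
  - destruct H as [[Hv1 [Hv2 _]] [Hz _]]. simpl in Hz. subst z.
    inversion HF as [|? ? [_ Hf2]]; subst. auto.
Qed.

Lemma X_decomp c t i L : path c t (yword (rev L)) -> ge2 lt c -> lt i c ->
  exists Tp, L = Tp ++ dropw i L /\ Forall (inG i) Tp /\
    path (src t (dropw i L)) t (yword (rev (dropw i L))) /\
    path c (src t (dropw i L)) (yword (rev Tp)) /\
    ge2 lt (src t (dropw i L)) /\ lt i (src t (dropw i L)).
Proof.
  intros H Hc Hic. destruct (dropw_split i L) as [Tp [E F]].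
  exists Tp. split; auto. split; auto.
  rewrite E, rev_app_distr, <- yword_app in H. apply path_app in H.
  destruct H as [z [H1 H2]]. rewrite (src_lemma _ _ _ H1).
  split; auto. split; auto. apply (inG_path i (rev Tp) c z); auto.
  apply Forall_rev; auto.
Qed.

Definition okb (t : T) (b : Bt) : Prop :=
  path (src t (snd (fst b))) t (yword (rev (snd (fst b)))) /\
  ge2 lt (src t (snd (fst b))) /\ lt (fst (fst b)) (src t (snd (fst b))).

Lemma img_ok t u : forall L s m, path s m u -> path m t (yword (rev L)) ->
  Forall (okb t) (img L u) /\ path s t (yword (rev (actE L (Eu u)))).
Proof.
  induction u as [|l u IH]; intros L s m Hu HL; simpl.
  - simpl in Hu; subst; auto.
  - destruct Hu as [Hv [Ht Hu]].
    assert (Hl : path (lsrc l) m [l]) by solve_path.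
    pose proof (epath_step _ _ _ _ _ HL Hl) as HL'.
    destruct (IH _ _ _ Hu HL') as [IH1 IH2].
    split.
    + apply Forall_app; split; auto.
      destruct l as [[c i|p q] sg]; simpl; auto.
      simpl in Hv, Ht. destruct Hv as [Hc Hic].
      assert (HLc : path c t (yword (rev L))) by (destruct sg; simpl in Ht; subst m; exact HL).
      destruct (X_decomp c t i L HLc Hc Hic) as [Tp [_ [_ [P1 [_ [P2 P3]]]]]].
      constructor; auto. split; auto.
    + unfold Eu in *. simpl. rewrite act_app. auto.
Qed.


Definition realize1 (t : T) (b : Bt) : list letter :=
  yword (rev (snd (fst b))) ++ [(X (src t (snd (fst b))) (fst (fst b)), snd b)] ++
  winv (yword (rev (snd (fst b)))).

Definition realize (t : T) (F : list Bt) : list letter := flat_map (realize1 t) F.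

Definition canon (t : T) (u : list letter) : list letter :=
  realize t (rev (actB [] (img [] u))) ++ yword (rev (actE [] (Eu u))).

Lemma realize1_path t b : okb t b -> path t t (realize1 t b).
Proof.
  intros [H1 [H2 H3]]. unfold realize1.
  apply path_app_i with (src t (snd (fst b))); auto.
  apply path_app_i with (src t (snd (fst b))).
  - solve_path.
  - apply path_winv; auto.
Qed.

Lemma realize_path t F : Forall (okb t) F -> path t t (realize t F).
Proof.
  induction 1; simpl; auto. apply path_app_i with t; auto. apply realize1_path; auto.
Qed.

Lemma realize_cancel t b : okb t b -> zeq t t (realize1 t (binv b) ++ realize1 t b) [].
Proof.
  intros [H1 [H2 H3]]. destruct b as [[i S] sg]. unfold realize1, binv. cbn [fst snd] in *.
  set (Yw := yword (rev S)) in *. set (d := src t S) in *.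
  apply zeq_trans with (Yw ++ [(X d i, negb sg)] ++ [] ++ [(X d i, sg)] ++ winv Yw).
  - replace ((Yw ++ [(X d i, negb sg)] ++ winv Yw) ++ Yw ++ [(X d i, sg)] ++ winv Yw)
      with ((Yw ++ [(X d i, negb sg)]) ++ (winv Yw ++ Yw) ++ ([(X d i, sg)] ++ winv Yw))
      by (repeat rewrite <- app_assoc; reflexivity).
    replace (Yw ++ [(X d i, negb sg)] ++ [] ++ [(X d i, sg)] ++ winv Yw)
      with ((Yw ++ [(X d i, negb sg)]) ++ [] ++ ([(X d i, sg)] ++ winv Yw))
      by (repeat rewrite <- app_assoc; reflexivity).
    apply zeq_ctx with d d.
    + eapply cancel_l; eauto.
    + apply path_app_i with d; auto. solve_path.
    + apply path_app_i with d; [solve_path|]. apply path_winv; auto.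
  - apply zeq_trans with (Yw ++ [] ++ winv Yw).
    + simpl app at 2.
      change (Yw ++ (X d i, negb sg) :: (X d i, sg) :: winv Yw) with
        (Yw ++ [(X d i, negb sg); (X d i, sg)] ++ winv Yw).
      apply zeq_ctx with d d; auto.
      * apply zeq_step. apply zstep' with [] [] [(X d i, negb sg); linv (X d i, negb sg)] [];
          [apply zrel_cancel| unfold linv; simpl; rewrite negb_involutive; reflexivity|reflexivity| |].
        -- solve_path.
        -- reflexivity.
      * apply path_winv; auto.
    + simpl. eapply cancel_r; eauto.
Qed.

Lemma realize_app t F G : realize t (F ++ G) = realize t F ++ realize t G.
Proof. apply flat_map_app. Qed.

Lemma realize_one t b : realize t [b] = realize1 t b.
Proof. unfold realize; simpl; apply app_nil_r. Qed.

Lemma realize_push t F b : Forall (okb t) F -> okb t b ->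
  zeq t t (realize t (rev F) ++ realize1 t b) (realize t (rev (pushB F b))).
Proof.
  intros HF Hb. destruct F as [|y F'].
  - change (realize t (rev []) ++ realize1 t b) with (realize1 t b).
    change (rev (pushB [] b)) with [b]. rewrite realize_one. apply zeq_refl.
  - unfold push. destruct (eqdA _ y (binv b)) as [e|n].
    + subst y. simpl rev. rewrite realize_app, realize_one, <- app_assoc.
      pose proof (zeq_ctxr t t _ _ t (realize t (rev F')) (realize_cancel t b Hb)) as Q.
      rewrite app_nil_r in Q. apply Q. inversion HF; subst. apply realize_path, Forall_rev; auto.
    + change (rev (b :: y :: F')) with (rev (y :: F') ++ [b]).
      rewrite realize_app, realize_one. apply zeq_refl.
Qed.

Lemma pushE_cases R f : (exists R', R = swap f :: R' /\ pushE R f = R') \/ pushE R f = f :: R.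
Proof.
  destruct R as [|y R']; simpl; auto.
  destruct (eqdA _ y (swap f)) as [e|n]; subst; eauto.
Qed.

Lemma Y_step m t s R p q sg : path m t (yword (rev R)) -> path s m [(Y p q, sg)] ->
  zeq s t (yword (rev R) ++ [(Y p q, sg)]) (yword (rev (actE R (ev (Y p q, sg))))).
Proof.
  intros HR Hl. apply path_one in Hl. destruct Hl as [[Hp [Hq Hpq]] [H1 H2]].
  destruct sg; simpl in *; subst.
  - destruct (pushE_cases R (p, q)) as [[R' [E1 E2]]|E]; rewrite E2 || rewrite E.
    + subst R. simpl in HR. rewrite <- yword_app in HR. apply path_app in HR.
      destruct HR as [z [HR1 HR2]]. cbn in HR2. destruct HR2 as [_ [? ?]]. subst z.
      simpl rev. rewrite <- yword_app, <- app_assoc.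
      pose proof (zeq_ctxr p p _ _ t (yword (rev R')) (yy_cancel p q Hp Hq Hpq)) as Q.
      rewrite app_nil_r in Q. apply Q; auto.
    + simpl rev. rewrite <- yword_app. apply zeq_refl.
  - destruct (pushE_cases R (q, p)) as [[R' [E1 E2]]|E]; rewrite E2 || rewrite E.
    + subst R. simpl in HR. rewrite <- yword_app in HR. apply path_app in HR.
      destruct HR as [z [HR1 HR2]]. cbn in HR2. destruct HR2 as [_ [? ?]]. subst z.
      simpl rev. rewrite <- yword_app, <- app_assoc.
      assert (C : zeq q q [(Y p q, true); (Y p q, false)] []).
      { apply zeq_step. apply zstep' with [] [] [(Y p q, true); linv (Y p q, true)] [];
          [apply zrel_cancel|reflexivity|reflexivity| |].
        - simpl; repeat split; auto.
        - reflexivity. }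
      pose proof (zeq_ctxr q q _ _ t (yword (rev R')) C) as Q.
      rewrite app_nil_r in Q. apply Q; auto.
    + simpl rev. rewrite <- yword_app. apply zeq_ctxr with p; auto.
      apply yfalse; auto.
Qed.

Lemma Eu_one l : Eu [l] = ev l.
Proof. unfold Eu; simpl; apply app_nil_r. Qed.

Theorem NF u : forall s t, path s t u -> zeq s t u (canon t u).
Proof.
  induction u as [|l u IH] using rev_ind; intros s t Hu.
  - simpl in Hu. subst. unfold canon. simpl. apply zeq_refl.
  - apply path_app in Hu. destruct Hu as [m [Hu Hl]].
    apply zeq_trans with (canon t u ++ [l]).
    + apply zeq_ctxl with m; auto.
    + destruct (img_ok t u [] m t Hu eq_refl) as [Hok HR].
      unfold canon. rewrite img_app, Eu_app, !act_app, Eu_one. simpl img.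
      set (F := actB [] (img [] u)). set (R := actE [] (Eu u)).
      assert (HF : Forall (okb t) F) by (apply Forall_act; auto).
      fold R in HR. simpl in HR.
      destruct l as [[c i|p q] sg].
      * simpl. assert (Hs : s = c /\ m = c /\ ge2 lt c /\ lt i c).
        { destruct sg; cbn in Hl; destruct Hl as [[? ?] [? ?]]; subst; auto. }
        destruct Hs as [-> [-> [Hc Hic]]].
        try rewrite app_nil_r.
        destruct (X_decomp c t i R HR Hc Hic) as [Tp [E1 [E2 [E3 [E4 [E5 E6]]]]]].
        set (S' := dropw i R) in *. set (d := src t S') in *.
        assert (Hb : okb t ((i, S'), sg)) by (split; auto).
        apply zeq_trans with (realize t (rev F) ++ realize1 t ((i, S'), sg) ++ yword (rev R)).
        -- rewrite <- app_assoc. apply zeq_ctxr with t; [|apply realize_path, Forall_rev; auto].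
           rewrite E1, rev_app_distr, <- yword_app. unfold realize1. simpl. fold d.
           apply zeq_trans with (yword (rev S') ++ ([(X d i, sg)] ++ yword (rev Tp))).
           ++ rewrite <- app_assoc. apply zeq_ctxr with d; auto.
              apply L_T; auto. apply Forall_rev; auto.
           ++ replace (yword (rev S') ++ [(X d i, sg)] ++ yword (rev Tp)) with
                ((yword (rev S') ++ [(X d i, sg)]) ++ [] ++ yword (rev Tp))
                by (rewrite <- app_assoc; reflexivity).
              replace ((yword (rev S') ++ (X d i, sg) :: winv (yword (rev S'))) ++
                 yword (rev S') ++ yword (rev Tp)) with
                ((yword (rev S') ++ [(X d i, sg)]) ++ (winv (yword (rev S')) ++ yword (rev S'))
                  ++ yword (rev Tp)) by (repeat rewrite <- app_assoc; reflexivity).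
              apply zeq_ctx with d d; auto.
              ** apply zeq_sym. eapply cancel_l; eauto.
              ** apply path_app_i with d; auto. solve_path.
        -- rewrite app_assoc. apply zeq_ctxl with t; auto.
           apply realize_push; auto.
      * simpl.
        rewrite <- app_assoc. apply zeq_ctxr with t; [|apply realize_path, Forall_rev; auto].
        apply Y_step with m; auto.
Qed.


Lemma Eu_D c (w : fword T) : Eu (D c w) = [].
Proof. induction w; simpl; auto. Qed.

Lemma img_D K c (w : fword T) :
  img K (D c w) = map (fun p => ((fst p, dropw (fst p) K), snd p)) w.
Proof. induction w as [|p w IH]; simpl; auto. rewrite IH. reflexivity. Qed.

Lemma rel_inv lhs rhs : zrel lhs rhs -> forall L, rd _ swap L ->
  actE L (Eu lhs) = actE L (Eu rhs) /\ actB [] (img L lhs) = actB [] (img L rhs).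
Proof.
  intros Hr L HL. destruct Hr as [l|b a e w He Hw].
  - destruct l as [[c i|p q] sg].
    + simpl. split; auto.
      all: unfold act; simpl; destruct (eqdA _ _ _) as [_|n]; auto;
        exfalso; apply n; unfold binv; simpl; rewrite negb_involutive; auto.
    + split.
      * unfold Eu; simpl. destruct sg; simpl.
        -- apply (push_inv _ swap swap_swap L (p, q)); auto.
        -- apply (push_inv _ swap swap_swap L (q, p)); auto.
      * destruct sg; reflexivity.
  - assert (Hi : forall p, In p w -> inG (fst p) (b, a)).
    { intros p Hp. specialize (Hw p Hp). unfold le in He.
      destruct He as [[H1 H2]|[H1 H2]]; subst; split; simpl; auto;
        destruct H1; subst; eauto. }
    split.
    + unfold Eu. simpl. rewrite flat_map_app. fold (Eu (D b w)). fold (Eu (D a w)).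
      rewrite !Eu_D. simpl. apply (push_inv _ swap swap_swap L (b, a)); auto.
    + simpl. rewrite img_app, !img_D. simpl. rewrite app_nil_r.
      f_equal. apply map_ext_in. intros p Hp. rewrite dropw_push; auto.
Qed.

Definition PhiEq (x y : list letter) : Prop :=
  actB [] (img [] x) = actB [] (img [] y) /\ actE [] (Eu x) = actE [] (Eu y).

Lemma step_sound s t x y : zstep s t x y -> PhiEq x y.
Proof.
  intros [u v lhs rhs Hr _ _]. unfold PhiEq.
  set (L1 := actE [] (Eu u)).
  assert (HL1 : rd _ swap L1) by (apply rd_act; simpl; auto).
  destruct (rel_inv _ _ Hr L1 HL1) as [E1 E2].
  rewrite !img_app, !Eu_app, !act_app. fold L1. rewrite E1. split; auto.
  rewrite (act_B _ binv binv_binv (act _ binv [] (img [] u)) (img L1 lhs)) by (apply rd_act; simpl; auto).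
  rewrite (act_B _ binv binv_binv (act _ binv [] (img [] u)) (img L1 rhs)) by (apply rd_act; simpl; auto).
  rewrite E2. reflexivity.
Qed.

Lemma zeq_sound s t x y : zeq s t x y -> PhiEq x y.
Proof.
  induction 1.
  - eapply step_sound; eauto.
  - split; auto.
  - destruct IHclos_refl_sym_trans; split; auto.
  - destruct IHclos_refl_sym_trans1, IHclos_refl_sym_trans2; split; congruence.
Qed.

Lemma ev_linv l : ev (linv l) = finv _ swap (ev l).
Proof. destruct l as [[c i|p q] []]; reflexivity. Qed.

Lemma Eu_winv u : Eu (winv u) = finv _ swap (Eu u).
Proof.
  induction u as [|l u IH]; simpl; auto.
  rewrite winv_cons, Eu_app, IH, Eu_one, ev_linv.
  unfold Eu at 2; simpl. fold (Eu u). rewrite finv_app. reflexivity.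
Qed.

Lemma img_winv u : forall L, rd _ swap L ->
  img (actE L (Eu u)) (winv u) = finv _ binv (img L u).
Proof.
  induction u as [|l u IH]; intros L HL; simpl; auto.
  set (L' := actE L (ev l)).
  assert (HL' : rd _ swap L') by (apply rd_act; auto).
  rewrite winv_cons, img_app.
  replace (actE L (ev l ++ Eu u)) with (actE L' (Eu u)) by
    (unfold L'; rewrite act_app; reflexivity).
  rewrite IH by auto.
  rewrite Eu_winv, <- act_app, act_cancel by (auto; apply swap_swap).
  rewrite finv_app. f_equal.
  destruct l as [[c i|p q] sg]; simpl; auto.
Qed.

Lemma path_D c (w : fword T) : ge2 lt c -> (forall p, In p w -> lt (fst p) c) ->
  path c c (D c w).
Proof.
  intros Hc Hw. induction w as [|p w IH]; simpl; auto.
  repeat split; auto.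
  - apply Hw; simpl; auto.
  - destruct (snd p); auto.
  - fixX. destruct (snd p); simpl; apply IH; intros; apply Hw; simpl; auto.
Qed.

Lemma img_yword L e : img L (yword e) = [].
Proof. revert L; induction e; simpl; auto. Qed.

Lemma Eu_yword e : Eu (yword e) = e.
Proof. induction e as [|[p q] e IH]; simpl; auto. rewrite IH; auto. Qed.


Lemma yred_snoc (L : list (T * T)) y x : yreduced (L ++ [y]) -> ~ (fst y = snd x /\ snd y = fst x) ->
  yreduced (L ++ [y; x]).
Proof.
  induction L as [|z L IH]; simpl; intros H1 H2.
  - auto.
  - destruct L as [|z' L'']; simpl in *.
    + destruct H1; auto.
    + destruct H1 as [H1 H3]. split; auto. apply IH; auto.
Qed.

Lemma yred_rd R : rd _ swap R -> yreduced (rev R).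
Proof.
  induction R as [|x R IH]; simpl; auto.
  intros H. destruct R as [|y R'].
  - simpl; auto.
  - destruct H as [H1 H2]. specialize (IH H2). simpl in IH |- *.
    rewrite <- app_assoc. simpl. apply yred_snoc; auto.
    intros [E1 E2]. apply H1. destruct x, y; unfold swap; simpl in *; subst; auto.
Qed.

Lemma not_lt_le x y : le lt y x -> ~ lt x y.
Proof.
  intros [H|H] H'.
  - apply (lt_irr x); eauto.
  - subst; apply (lt_irr x); auto.
Qed.

Lemma lt_of_not d g i : ~ lt d g -> lt i g -> lt i d.
Proof.
  intros H1 H2. destruct (lt_tot d g) as [h|[h|h]]; [contradiction|subst; auto|eauto].
Qed.

Lemma main a b g u : ge2 lt a -> ge2 lt b -> path b a u -> ge2 lt g ->
  le lt g a -> le lt g b ->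
  (in_ZY_avoiding lt b a g u <->
   (forall w : fword T, in_G lt g w -> zeq a a (D a w) (u ++ D b w ++ winv u))).
Proof.
  intros Ha Hb Hu Hg Hga Hgb. split.
  - intros [e [Hy [Hp [Hz Hav]]]] w Hw.
    assert (Hin : forall i, lt i g -> Forall (inG i) e).
    { intros i Hi. apply Forall_forall. intros p Hpe.
      assert (Q : forall d, (fst p = d \/ snd p = d) -> lt i d).
      { intros d Hd. apply lt_of_not with g; auto. apply Hav.
        destruct e as [|p0 e0]; [destruct Hpe|]. exists p; auto. }
      split; apply Q; auto. }
    destruct (zeq_sound _ _ _ _ Hz) as [Z1 Z2].
    rewrite img_yword in Z1. rewrite Eu_yword in Z2. simpl in Z1.
    assert (HwA : forall p, In p w -> lt (fst p) a).
    { intros p Hp'. specialize (Hw p Hp'). destruct Hga; subst; eauto. }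
    assert (HwB : forall p, In p w -> lt (fst p) b).
    { intros p Hp'. specialize (Hw p Hp'). destruct Hgb; subst; eauto. }
    assert (PD : path a a (D a w)) by (apply path_D; auto).
    assert (PX : path a a (u ++ D b w ++ winv u)).
    { apply path_app_i with b; auto. apply path_app_i with b.
      - apply path_D; auto.
      - apply path_winv; auto. }
    assert (EC : canon a (D a w) = canon a (u ++ D b w ++ winv u)).
    { unfold canon. f_equal.
      - f_equal. f_equal.
        rewrite !img_app, !img_D, Eu_D.
        change (actE (actE [] (Eu u)) []) with (actE [] (Eu u)).
        rewrite img_winv by (simpl; auto).
        rewrite Z2.
        set (W0 := map (fun p : T * bool => (fst p, dropw (fst p) [], snd p)) w).
        replace (map (fun p : T * bool => (fst p, dropw (fst p) (actE [] e), snd p)) w) with W0.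
        + rewrite !act_app, Z1. rewrite finv_act; auto.
          * apply binv_binv.
          * apply rd_act; simpl; auto.
        + unfold W0. apply map_ext_in. intros p Hp'. f_equal. f_equal.
          simpl. rewrite dropw_all; auto. apply Forall_act; auto.
      - f_equal. f_equal. rewrite !Eu_app, !Eu_D, Eu_winv. simpl.
        symmetry. apply (act_cancel _ swap swap_swap [] (Eu u)). simpl; auto. }
    eapply zeq_trans; [apply NF; auto|]. rewrite EC. apply zeq_sym, NF; auto.
  - intros H.
    set (R := actE [] (Eu u)). set (N := actB [] (img [] u)).
    assert (key : forall i, lt i g -> dropw i R = [] /\
      forall z, In z N -> z = ((i, []), true) \/ z = binv ((i, []), true)).
    { intros i Hi. assert (Hw : in_G lt g [(i, true)]) by (intros p [<-|[]]; auto).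
      specialize (H _ Hw). destruct (zeq_sound _ _ _ _ H) as [P1 _].
      rewrite !img_app, Eu_D in P1.
      change (actE (actE [] (Eu u)) []) with (actE [] (Eu u)) in P1.
      rewrite img_winv in P1 by (simpl; auto).
      rewrite !img_D in P1. cbn [map fst snd] in P1.
      change (dropw i []) with (@nil (T * T)) in P1.
      change (actB [] [(i, [], true)]) with [((i, @nil (T * T)), true)] in P1.
      symmetry in P1. fold R in P1.
      destruct (conj_gen _ binv binv_binv _ _ _ P1) as [E1 E2].
      split; auto. injection E1; auto. }
    assert (HN : N = []).
    { destruct Hg as [i0 [i1 [H01 H1g]]].
      destruct N as [|z N'] eqn:EN; auto. exfalso.
      assert (Hz : In z (z :: N')) by (simpl; auto).
      destruct (key i0 ltac:(eauto)) as [_ K0]. destruct (key i1 H1g) as [_ K1].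
      assert (F0 : fst z = (i0, [])) by (destruct (K0 z Hz) as [->| ->]; reflexivity).
      assert (F1 : fst z = (i1, [])) by (destruct (K1 z Hz) as [->| ->]; reflexivity).
      rewrite F0 in F1. injection F1 as F1. subst. apply (lt_irr i1); auto. }
    exists (rev R). split; [|split; [|split]].
    + apply yred_rd, rd_act; simpl; auto.
    + apply (img_ok a u [] b a Hu eq_refl).
    + pose proof (NF u b a Hu) as Q. unfold canon in Q. fold N R in Q. rewrite HN in Q.
      exact Q.
    + intros d Hd Hlt. unfold passes_through in Hd.
      destruct (rev R) as [|p0 e0] eqn:ER.
      * subst d. apply (not_lt_le b g); auto.
      * destruct Hd as [p [Hp Hdp]].
        assert (HpR : In p R) by (apply in_rev; rewrite ER; auto).
        destruct (key d Hlt) as [K _]. apply dropw_nil in K.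
        rewrite Forall_forall in K. destruct (K p HpR) as [K1 K2].
        destruct Hdp as [<-| <-]; apply (lt_irr _ ltac:(eassumption)).
Qed.

End ZZ.

Theorem lemma3p11 (T : Type) (lt : T -> T -> Prop)
  (Hwo : well_ordering lt) (Hcof : uncountable_cofinality lt)
  (a b g : T) (Ha : ge2 lt a) (Hb : ge2 lt b)
  (u : list (letter T)) (Hu : path lt b a u)
  (Hg : ge2 lt g) (Hga : le lt g a) (Hgb : le lt g b) :
  in_ZY_avoiding lt b a g u <->
  (forall w : fword T, in_G lt g w ->
     zeq lt a a (D a w) (u ++ D b w ++ winv u)).
Proof.
  destruct Hwo as [Hirr [Htr [Htot _]]].
  apply main; auto.
Qed.
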